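(* Let $n\ge1$. If $\mathcal W$ is an $(n,T(n))$-weakly Ramsey non-P-point in standard position on $\omega^2$, then there is a set $P\in\mathcal W$ such that every $n$-element subset of $P$ realizes some $n$-type.
   Context: Ultrafilters are nonprincipal. A non-P-point in standard position is an ultrafilter $\mathcal W$ on $\omega^2$ such that $\pi_1:\omega^2\to\omega$ (first projection) is neither finite-to-one nor constant on any set in $\mathcal W$. $\mathcal W$ is $(n,t)$-weakly Ramsey if for every partition of $[\omega^2]^n$ into finitely many pieces there is $H\in\mathcal W$ with $[H]^n$ meeting at most $t$ pieces. An $n$-type is a linear pre-order of the formal symbols $x_1,\dots,x_n,y_1,\dots,y_n$ with $y_1<\dots<y_n$ strictly, each $x_i<y_i$ strictly, and any two distinct equivalent symbols both $x$'s. An $n$-element set $\{\langle a_1,b_1\rangle,\dots,\langle a_n,b_n\rangle\}\subseteq\omega^2$ with $b_1<\dots<b_n$ realizes $\tau$ if for all symbols $s,t$: $s\le_\tau t$ iff $v(s)\le v(t)$, with $v(x_i)=a_i,v(y_i)=b_i$; a set with two elements sharing a second coordinate realizes no type. $T(n)$ is the number of $n$-types. *)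

(* Defs.v *)
From mathcomp Require Import all_boot.
Set Implicit Arguments. Unset Strict Implicit. Unset Printing Implicit Defensive.

Definition pt := (nat * nat)%type.
Definition pset := pt -> Prop.

Definition is_ultrafilter (W : pset -> Prop) : Prop :=
  [/\ ~ W (fun _ => False),
      W (fun _ => True),
      (forall A B : pset, W A -> (forall p, A p -> B p) -> W B),
      (forall A B : pset, W A -> W B -> W (fun p => A p /\ B p)) &
      (forall A : pset, W A \/ W (fun p => ~ A p))].

(* Nonprincipal: contains no singleton, i.e. every co-singleton is in W. *)
Definition nonprincipal (W : pset -> Prop) : Prop :=
  forall q : pt, W (fun p => p <> q).

Definition pi1_finite_to_one (A : pset) : Prop :=
  forall a, exists m, forall b, A (a, b) -> b < m.

Definition pi1_constant (A : pset) : Prop :=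
  exists a, forall p, A p -> p.1 = a.

Definition non_P_point_std (W : pset -> Prop) : Prop :=
  forall A, W A -> ~ pi1_finite_to_one A /\ ~ pi1_constant A.

(* [omega^2]^n: an n-element subset is represented by any duplicate-free
   list of length n enumerating it; a finite partition of [omega^2]^n into
   k pieces is a colouring c of lists into 'I_k that is invariant under
   permutation (so it depends only on the underlying set). *)
Definition nsubset_of (n : nat) (H : pset) (l : seq pt) : Prop :=
  [/\ uniq l, size l = n & forall p, p \in l -> H p].

Definition weakly_Ramsey (n t : nat) (W : pset -> Prop) : Prop :=
  forall (k : nat) (c : seq pt -> 'I_k),
    (forall l1 l2, perm_eq l1 l2 -> c l1 = c l2) ->
    exists H : pset, W H /\
      exists S : {set 'I_k}, #|S| <= t /\
        forall l, nsubset_of n H l -> c l \in S.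

(* Formal symbols: inl i = x_(i+1), inr i = y_(i+1). *)
Definition sym (n : nat) := ('I_n + 'I_n)%type.
Definition is_x n (s : sym n) : bool := if s is inl _ then true else false.

(* A candidate pre-order is a boolean relation r, r (s,t) meaning s <= t. *)
Definition is_ntype (n : nat) (r : {ffun sym n * sym n -> bool}) : bool :=
  [&& [forall s, forall t, r (s, t) || r (t, s)],
      [forall s, forall t, forall u, r (s, t) ==> r (t, u) ==> r (s, u)],
      [forall i : 'I_n, forall j : 'I_n,
         (i < j) ==> (r (inr i, inr j) && ~~ r (inr j, inr i))],
      [forall i : 'I_n, r (inl i, inr i) && ~~ r (inr i, inl i)]
    & [forall s, forall t, ((s != t) && r (s, t) && r (t, s)) ==> (is_x s && is_x t)]].

Definition T (n : nat) : nat := #|[set r | is_ntype (n := n) r]|.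

Definition symval n (l : seq pt) (s : sym n) : nat :=
  match s with
  | inl i => (nth (0, 0) l i).1
  | inr i => (nth (0, 0) l i).2
  end.

(* The set enumerated by X realizes tau: it can be listed as
   (a_1,b_1),...,(a_n,b_n) with b_1 < ... < b_n and
   s <=_tau t iff v(s) <= v(t).  (A set with two elements sharing a
   second coordinate admits no such listing, hence realizes no type.) *)
Definition realizes n (r : {ffun sym n * sym n -> bool}) (X : seq pt) : Prop :=
  exists l : seq pt,
    [/\ perm_eq l X, sorted (fun p q : pt => p.2 < q.2) l &
        forall s t : sym n, r (s, t) = (symval l s <= symval l t)].

(* Main.v *)
Require Import Defs.
From mathcomp Require Import all_boot.
From Stdlib Require Import Classical ClassicalEpsilon.
Set Implicit Arguments. Unset Strict Implicit. Unset Printing Implicit Defensive.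

Lemma nt_tot n (r : {ffun sym n * sym n -> bool}) : is_ntype r -> forall s t, r (s,t) || r (t,s).
Proof. by case/and5P => /forallP H _ _ _ _ s t; move/forallP: (H s); apply. Qed.
Lemma nt_trans n (r : {ffun sym n * sym n -> bool}) : is_ntype r ->
  forall s t u, r (s,t) -> r (t,u) -> r (s,u).
Proof.
case/and5P => _ /forallP H _ _ _ s t u h1 h2.
by move/forallP: (H s) => /(_ t) /forallP /(_ u) /implyP /(_ h1) /implyP /(_ h2).
Qed.
Lemma nt_y n (r : {ffun sym n * sym n -> bool}) : is_ntype r ->
  forall i j : 'I_n, i < j -> r (inr i, inr j) && ~~ r (inr j, inr i).
Proof.
case/and5P => _ _ /forallP H _ _ i j ij.
by move/forallP: (H i) => /(_ j) /implyP /(_ ij).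
Qed.
Lemma nt_xy n (r : {ffun sym n * sym n -> bool}) : is_ntype r ->
  forall i : 'I_n, r (inl i, inr i) && ~~ r (inr i, inl i).
Proof. by case/and5P => _ _ _ /forallP H _ i; apply: H. Qed.
Lemma nt_eq n (r : {ffun sym n * sym n -> bool}) : is_ntype r ->
  forall s t, s != t -> r (s,t) -> r (t,s) -> is_x s && is_x t.
Proof.
case/and5P => _ _ _ _ /forallP H s t h1 h2 h3.
by move/forallP: (H s) => /(_ t) /implyP; apply; rewrite h1 h2 h3.
Qed.
Definition below n (r : {ffun sym n * sym n -> bool}) (s : sym n) : {set sym n} :=
  [set t | r (t,s) && ~~ r (s,t)].
Definition ht n (r : {ffun sym n * sym n -> bool}) s := #|below r s|.

Lemma below_sub n (r : {ffun sym n * sym n -> bool}) : is_ntype r ->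
  forall s t, r (s,t) -> below r s \subset below r t.
Proof.
move=> hr s t hst; apply/subsetP => u; rewrite !inE => /andP[h1 h2].
rewrite (nt_trans hr h1 hst) /=; apply/negP => htu.
by move/negP: h2; apply; apply: (nt_trans hr hst htu).
Qed.

Lemma ht_le n (r : {ffun sym n * sym n -> bool}) : is_ntype r ->
  forall s t, r (s,t) = (ht r s <= ht r t).
Proof.
move=> hr s t; case hst: (r (s,t)).
  by rewrite /ht subset_leq_card // below_sub.
have hts : r (t,s) by move: (nt_tot hr s t); rewrite hst.
apply/esym/negbTE; rewrite -ltnNge; apply: proper_card; apply/properP; split.
  exact: below_sub.
exists t; first by rewrite inE hts hst.
by rewrite inE; move: (nt_tot hr t t); rewrite orbb => ->.
Qed.
Definition nextv n (r : {ffun sym n * sym n -> bool}) (gc : nat -> nat)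
  (fb : nat -> nat -> nat) (s : seq nat) k :=
  let m := \max_(x <- s) x in
  match [pick i : 'I_n | ht r (inr i) == k] with
  | Some i => fb (nth 0 s (ht r (inl i))) m
  | None => gc m end.
Fixpoint vals n (r : {ffun sym n * sym n -> bool}) (gc : nat -> nat)
  (fb : nat -> nat -> nat) (k : nat) : seq nat :=
  if k is k'.+1 then rcons (vals r gc fb k') (@nextv n r gc fb (vals r gc fb k') k') else [::].
Definition V n (r : {ffun sym n * sym n -> bool}) (gc : nat -> nat)
  (fb : nat -> nat -> nat) k := @nextv n r gc fb (vals r gc fb k) k.

Lemma vals_mkseq n r gc fb k : @vals n r gc fb k = mkseq (V r gc fb) k.
Proof.
elim: k => [//|k IH] /=.
rewrite {1}IH /mkseq -[k.+1]addn1 iotaD add0n map_cat cats1 -/(mkseq _ _) -IH.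
by [].
Qed.

Lemma V_unfold n r gc fb k : @V n r gc fb k = nextv r gc fb (mkseq (V r gc fb) k) k.
Proof. by rewrite /V vals_mkseq. Qed.

Lemma V_lt n r gc fb : (forall m, m < gc m) -> (forall a m, m < fb a m) ->
  forall j k, j < k -> @V n r gc fb j < V r gc fb k.
Proof.
move=> hg hf j k jk; rewrite (V_unfold _ _ _ k) /nextv.
have hm : V r gc fb j <= \max_(x <- mkseq (V r gc fb) k) x.
  by apply: (@leq_bigmax_seq _ _ xpredT id); rewrite // map_f // mem_iota.
by case: pickP => [i _|_]; apply: leq_ltn_trans hm _.
Qed.

Lemma V_le n r gc fb : (forall m, m < gc m) -> (forall a m, m < fb a m) ->
  forall j k, (@V n r gc fb j <= V r gc fb k) = (j <= k).
Proof.
move=> hg hf j k; case: (ltngtP j k) => h.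
- by apply: ltnW; apply: V_lt.
- by apply: negbTE; rewrite -ltnNge; apply: V_lt.
- by rewrite h !leqnn.
Qed.

Definition G (A : pset) a := forall m, exists b, m < b /\ A (a,b).

Lemma realize_type n (A : pset) (r : {ffun sym n * sym n -> bool}) : is_ntype r ->
  (forall m, exists a, m < a /\ G A a) ->
  exists X, nsubset_of n A X /\ realizes r X.
Proof.
move=> hr HG.
pose gc := fun m => proj1_sig (constructive_indefinite_description _ (HG m)).
have gcP : forall m, m < gc m /\ G A (gc m).
  by move=> m; rewrite /gc; case: constructive_indefinite_description.
have hfb : forall a m, exists b, m < b /\ (G A a -> A (a,b)).
  move=> a m; case: (classic (G A a)) => [g|ng].
    by case: (g m) => b [h1 h2]; exists b.
  by exists m.+1; split => // /ng.
pose fb := fun a m => proj1_sig (constructive_indefinite_description _ (hfb a m)).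
have fbP : forall a m, m < fb a m /\ (G A a -> A (a, fb a m)).
  by move=> a m; rewrite /fb; case: constructive_indefinite_description.
have hg m : m < gc m by case: (gcP m).
have hf a m : m < fb a m by case: (fbP a m).
pose v s := V r gc fb (ht r s).
have hv s t : r (s,t) = (v s <= v t) by rewrite /v V_le // ht_le.
have hx i : G A (v (inl i)).
  rewrite /v V_unfold /nextv; case: pickP => [j /eqP hj | _]; last exact: (proj2 (gcP _)).
  have h1 : r (inr j, inl i) by rewrite ht_le // hj.
  have h2 : r (inl i, inr j) by rewrite ht_le // hj.
  by move: (nt_eq hr (isT : inr j != inl i) h1 h2).
have hy i : A (v (inl i), v (inr i)).
  have hlt : ht r (inl i) < ht r (inr i).
    by rewrite ltnNge -ht_le //; case/andP: (nt_xy hr i).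
  rewrite {2}/v V_unfold /nextv; case: pickP => [j /eqP hj | hn]; last first.
    by move: (hn i); rewrite eqxx.
  have ej : j = i.
    have h1 : r (inr i, inr j) by rewrite ht_le // hj.
    have h2 : r (inr j, inr i) by rewrite ht_le // hj.
    case: (ltngtP j i) => h.
    - by case/andP: (nt_y hr h); rewrite h1.
    - by case/andP: (nt_y hr h); rewrite h2.
    - exact: val_inj.
  subst j; rewrite nth_mkseq //.
  exact: (proj2 (fbP _ _) (hx i)).
pose X := [seq (v (inl i), v (inr i)) | i <- enum 'I_n].
have hsym s : symval X s = v s.
  by case: s => i; rewrite /symval (nth_map i) ?size_enum_ord // nth_ord_enum.
have hsort : sorted (fun p q : pt => p.2 < q.2) X.
  rewrite sorted_map.
  have : sorted ltn (map val (enum 'I_n)) by rewrite val_enum_ord iota_ltn_sorted.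
  rewrite sorted_map; apply: sub_sorted => i j /= ij.
  by rewrite ltnNge -hv; case/andP: (nt_y hr ij).
exists X; split; last first.
  by exists X; split => // s t; rewrite !hsym hv.
split.
- apply: (sorted_uniq _ _ hsort).
    by move=> p q u /= h1 h2; apply: ltn_trans h1 h2.
  by move=> p /=; rewrite ltnn.
- by rewrite size_map size_enum_ord.
- by move=> p /mapP [i _ ->]; apply: hy.
Qed.

Lemma notW_col W : is_ultrafilter W -> non_P_point_std W ->
  forall m, ~ W (fun p : pt => p.1 <= m).
Proof.
case=> _ _ hup hcap hult hnp; elim=> [|m IH] hW.
  by case: (hnp _ hW) => _; apply; exists 0 => p; rewrite leqn0 => /eqP.
case: (hult (fun p : pt => p.1 <= m)) => [//|hc].
have := hcap _ _ hW hc; move/hnp => [_]; apply; exists m.+1 => p [h1 h2].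
by apply/eqP; rewrite eqn_leq h1 leqNgt; apply/negP => h; apply: h2.
Qed.

Lemma good_cols W (A : pset) : is_ultrafilter W -> non_P_point_std W -> W A ->
  forall m, exists a, m < a /\ G A a.
Proof.
move=> hu hnp hA m; apply: NNPP => hno.
have hu' := hu; case: hu' => _ _ hup hcap hult.
pose B := fun p : pt => A p /\ m < p.1.
have hB : ~ W B.
  move/hnp => [hf _]; apply: hf => a.
  case: (leqP a m) => ham.
    by exists 0 => b [_ /=]; rewrite ltnNge ham.
  have : ~ G A a by move=> g; apply: hno; exists a.
  move/not_all_ex_not => [m' hm']; exists m'.+1 => b [hab _].
  rewrite ltnS leqNgt; apply/negP => h; apply: hm'; by exists b.
case: (hult B) => [hWB|hnB]; first exact: hB hWB.
have hC : W (fun p : pt => p.1 <= m).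
  apply: (hup _ _ (hcap _ _ hA hnB)) => p [hp hnb].
  by rewrite leqNgt; apply/negP => h; apply: hnb.
exact: (notW_col hu hnp hC).
Qed.

Lemma real_uniq n (r1 r2 : {ffun sym n * sym n -> bool}) X :
  realizes r1 X -> realizes r2 X -> r1 = r2.
Proof.
move=> [l1 [p1 s1 e1]] [l2 [p2 s2 e2]].
have el : l1 = l2.
  apply: (irr_sorted_eq _ _ s1 s2).
  - by move=> p q u /= h1 h2; apply: ltn_trans h1 h2.
  - by move=> p /=; rewrite ltnn.
  - by apply: perm_mem; apply: perm_trans p1 _; rewrite perm_sym.
subst l2; apply/ffunP => [[s t]]; by rewrite e1 e2.
Qed.

Definition asb (P : Prop) : bool := if excluded_middle_informative P then true else false.
Lemma asbP (P : Prop) : reflect P (asb P).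
Proof. by rewrite /asb; case: excluded_middle_informative => h; constructor. Qed.
Lemma asb_iff (P Q : Prop) : (P <-> Q) -> asb P = asb Q.
Proof. by move=> h; apply/asbP/asbP; apply h. Qed.

Theorem mainTheorem4 (n : nat) (W : pset -> Prop) :
  1 <= n ->
  is_ultrafilter W -> nonprincipal W -> non_P_point_std W ->
  weakly_Ramsey n (T n) W ->
  exists P : pset, W P /\
    forall X : seq pt, nsubset_of n P X ->
      exists r : {ffun sym n * sym n -> bool}, is_ntype r /\ realizes r X.
Proof.
move=> _ hu _ hnp hwr.
pose Ty := [set r : {ffun sym n * sym n -> bool} | is_ntype r].
pose E := enum Ty.
have hsz : size E = T n by rewrite /E -cardE.
pose c := fun l : seq pt => (inord (find (fun r => asb (realizes r l)) E) : 'I_(T n).+1).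
have hc : forall l1 l2, perm_eq l1 l2 -> c l1 = c l2.
  move=> l1 l2 hp; rewrite /c; congr inord; apply: eq_find => r.
  apply: asb_iff; split => [[l [h1 h2 h3]]|[l [h1 h2 h3]]]; exists l; split => //.
    by apply: perm_trans h1 hp.
  by apply: perm_trans h1 _; rewrite perm_sym.
case: (hwr _ c hc) => H [hH [S [hS hcS]]].
exists H; split => // X hX.
pose f := fun r : {ffun sym n * sym n -> bool} => (inord (index r E) : 'I_(T n).+1).
have fS : forall r, r \in Ty -> f r \in S.
  move=> r hr.
  have hr' : is_ntype r by rewrite inE in hr.
  have [Xr [hXr hrr]] := realize_type hr' (good_cols hu hnp hH).
  have <- : c Xr = f r.
    rewrite /c /f; congr inord; rewrite /index; apply: eq_find => r' /=.
    apply/asbP/eqP => [h|->] //; exact: real_uniq h hrr.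
  exact: hcS.
have finj : {in Ty &, injective f}.
  move=> r1 r2 h1 h2 /(congr1 (@nat_of_ord _)); rewrite /f !inordK.
  - move=> e; have h1' : r1 \in E by rewrite mem_enum.
    have h2' : r2 \in E by rewrite mem_enum.
    by rewrite -(nth_index r1 h1') e (nth_index r1 h2').
  - by rewrite ltnS -hsz; apply: ltnW; rewrite index_mem mem_enum.
  - by rewrite ltnS -hsz; apply: ltnW; rewrite index_mem mem_enum.
have hS' : f @: Ty = S.
  apply/eqP; rewrite eqEcard; apply/andP; split.
    by apply/subsetP => y /imsetP [r hr ->]; apply: fS.
  by rewrite card_in_imset // (leq_trans hS).
have := hcS _ hX; rewrite -hS' => /imsetP [r hr].
move/(congr1 (@nat_of_ord _)); rewrite /c /f inordK; last by rewrite ltnS -hsz find_size.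
rewrite inordK; last by rewrite ltnS -hsz; apply: ltnW; rewrite index_mem mem_enum.
move=> hfe.
have : has (fun r => asb (realizes r X)) E.
  by rewrite has_find hfe hsz -hsz index_mem mem_enum.
case/hasP => r' hr' /asbP hre; exists r'; split => //.
by move: hr'; rewrite mem_enum inE.
Qed.
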